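(* Let $\mathcal{M}=(S,A,AP,L,I)$ be an interval Markov decision process and let $s,t\in S$ with $s\sim_{(\forall)} t$. Then for every PCTL state formula $\varphi$ we have $s\models_{(\exists)}\varphi$ if and only if $t\models_{(\exists)}\varphi$.
   Context: An interval MDP (IMDP) is a tuple $(S,A,AP,L,I)$ with $S$ a finite set of states, $A$ a finite set of actions, $AP$ a finite set of atomic propositions, $L:S\to 2^{AP}$ a labelling, and $I:S\times A\times S\to\mathbb{I}$ where $\mathbb{I}$ is a set of subintervals of $[0,1]$. For $s\in S,a\in A$, write $s\xrightarrow{a}\mu$ if $\mu$ is a probability distribution on $S$ with $\mu(s')\in I(s,a,s')$ for all $s'$; the set $\Gamma_{s,a}=\{\mu\mid s\xrightarrow{a}\mu\}$ is required to be non-empty. A scheduler is a function $\sigma$ from finite paths to distributions over $A$; a nature is a function $\pi$ mapping a finite path $\omega$ and action $a$ to an element of $\Gamma_{\mathrm{last}(\omega),a}$, where $\mathrm{last}(\omega)$ is the last state of $\omega$. $\Sigma,\Pi$ denote the sets of all schedulers and natures. $\Pr^{\sigma,\pi}_s$ is the unique probability measure on infinite paths (cylinder $\sigma$-algebra) with the one-state cylinder of $s'$ having probability $1$ iff $s'=s$ (else $0$), and $\Pr^{\sigma,\pi}_s[\mathrm{Cyl}(\omega s')]=\Pr^{\sigma,\pi}_s[\mathrm{Cyl}(\omega)]\cdot\sum_{a}\sigma(\omega)(a)\pi(\omega,a)(s')$. PCTL: state formulas $\varphi::=\mathit{true}\mid x\mid\neg\varphi\mid\varphi_1\wedge\varphi_2\mid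 \mathsf{P}_{\bowtie p}(\psi)$, path formulas $\psi::=\mathsf{X}\varphi\mid\varphi_1\mathsf{U}\varphi_2\mid\varphi_1\mathsf{U}^{\le k}\varphi_2$ ($x\in AP$, rational $p\in[0,1]$, $\bowtie\in\{\le,<,\ge,>\}$, $k\in\mathbb{N}$). The relation $\models_{(\exists)}$: $s\models x$ iff $x\in L(s)$; negation, conjunction as usual; $s\models_{(\exists)}\mathsf{P}_{\bowtie p}(\psi)$ iff there exist $\sigma\in\Sigma$ and $\pi\in\Pi$ with $\Pr^{\sigma,\pi}_s[\{\omega\mid\omega\models_{(\exists)}\psi\}]\bowtie p$. For $\omega=s_1s_2\cdots$: $\omega\models\mathsf{X}\varphi$ iff $s_2\models\varphi$; $\omega\models\varphi_1\mathsf{U}^{\le k}\varphi_2$ iff some $i\le k$ has $s_i\models\varphi_2$ and $s_j\models\varphi_1$ for all $j<i$; $\omega\models\varphi_1\mathsf{U}\varphi_2$ iff $\omega\models\varphi_1\mathsf{U}^{\le k}\varphi_2$ for some $k$. Cooperative bisimulation: write $s\to\mu$ if $\mu$ lies in the convex hull of $\bigcup_{a\in A}\Gamma_{s,a}$. An equivalence relation $R\subseteq S\times S$ is a probabilistic $(\forall)$-bisimulation if for all $(s,t)\in R$: $L(s)=L(t)$, and for each $s\to\mu$ there is $t\to\nu$ with $\mu(C)=\nu(C)$ for every equivalence class $C$ of $R$. $s\sim_{(\forall)}t$ iff some probabilistic $(\forall)$-bisimulation contains $(s,t)$. *)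

(* Defs.v *)
From HB Require Import structures.
From mathcomp Require Import all_boot all_order all_algebra.
From mathcomp Require Import all_classical all_reals all_analysis.
Set Implicit Arguments. Unset Strict Implicit. Unset Printing Implicit Defensive.
Import Order.TTheory GRing.Theory Num.Theory.
Local Open Scope classical_set_scope.
Local Open Scope ring_scope.

Definition is_distr (R : realType) (T : finType) (mu : T -> R) : Prop :=
  (forall x, 0 <= mu x) /\ \sum_(x : T) mu x = 1.

Definition gamma_of (R : realType) (S A : finType)
  (I : S -> A -> S -> interval R) (s : S) (a : A) : set (S -> R) :=
  [set mu | is_distr mu /\ forall s', mu s' \in I s a s'].

Record imdp (R : realType) := IMDP {
  st : finType;
  act : finType;
  ap : finType;
  lab : st -> {set ap};
  itv : st -> act -> st -> interval R;
  itv_sub01 : forall s a s' (x : R), x \in itv s a s' -> 0 <= x <= 1;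
  gamma_nonempty : forall s a, exists mu, gamma_of itv s a mu
}.

Arguments st {R}. Arguments act {R}. Arguments ap {R}.
Arguments lab {R}. Arguments itv {R}.

Definition Gamma (R : realType) (M : imdp R) (s : st M) (a : act M) :=
  gamma_of (itv M) s a.

(* Finite paths: the nonempty sequence x :: p is represented by (x, p). *)
Definition fpath (S : Type) := (S * seq S)%type.
Definition flast (S : Type) (w : fpath S) : S := last w.1 w.2.
Definition fext (S : Type) (w : fpath S) (s' : S) : fpath S := (w.1, rcons w.2 s').

Record scheduler (R : realType) (M : imdp R) := Scheduler {
  sched :> fpath (st M) -> act M -> R;
  sched_distr : forall w, is_distr (sched w)
}.

Record nature (R : realType) (M : imdp R) := Nature {
  natf :> fpath (st M) -> act M -> st M -> R;
  natf_in : forall w a, Gamma (flast w) a (natf w a)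
}.

(* Infinite paths (omega i = (i+1)-th state) and the cylinder sigma-algebra. *)
Definition ipath (S : Type) (s0 : S) := nat -> S.
Arguments ipath : clear implicits.
HB.instance Definition _ (S : Type) (s0 : S) := gen_eqMixin (ipath S s0).
HB.instance Definition _ (S : Type) (s0 : S) := gen_choiceMixin (ipath S s0).
HB.instance Definition _ (S : Type) (s0 : S) :=
  isPointed.Build (ipath S s0) (fun _ => s0).

Definition cyl (S : Type) (s0 : S) (w : fpath S) : set (ipath S s0) :=
  [set om | forall i, (i <= size w.2)%N -> om i = nth w.1 (w.1 :: w.2) i].

Arguments cyl : clear implicits.

Definition cyls (S : Type) (s0 : S) : set (set (ipath S s0)) :=
  [set C | exists w : fpath S, C = cyl S s0 w].

Arguments cyls : clear implicits.
Definition pathspace (S : Type) (s0 : S) := g_sigma_algebraType (cyls S s0).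
Arguments pathspace : clear implicits.

Definition is_path_measure (R : realType) (M : imdp R)
  (sg : scheduler M) (pi : nature M) (s : st M)
  (P : probability (pathspace (st M) s) R) : Prop :=
  (forall x : st M, P (cyl (st M) s (x, [::])) = (if x == s then 1 else 0)%:E) /\
  (forall (w : fpath (st M)) (s' : st M),
     P (cyl (st M) s (fext w s')) =
     (P (cyl (st M) s w) * (\sum_(a : act M) sg w a * pi w a s')%:E)%E).

Arguments is_path_measure {R M} sg pi s P.

Inductive cmp := CLe | CLt | CGe | CGt.

Definition cmp_sem (R : realType) (c : cmp) (x y : \bar R) : Prop :=
  match c with
  | CLe => (x <= y)%E
  | CLt => (x < y)%E
  | CGe => (x >= y)%E
  | CGt => (x > y)%E
  end.

Definition prob01 := {p : rat | 0 <= p <= 1}.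

Inductive sform (AP : Type) : Type :=
  | STrue : sform AP
  | SAtom : AP -> sform AP
  | SNot : sform AP -> sform AP
  | SAnd : sform AP -> sform AP -> sform AP
  | SProb : cmp -> prob01 -> pform AP -> sform AP
with pform (AP : Type) : Type :=
  | PNext : sform AP -> pform AP
  | PUntil : sform AP -> sform AP -> pform AP
  | PBUntil : sform AP -> sform AP -> nat -> pform AP.

Arguments STrue {AP}.

(* Existential semantics |=_(exists). Paths om are 0-indexed: om 0 = s_1. *)
Section Semantics.
Variables (R : realType) (M : imdp R).

Fixpoint sat_s (f : sform (ap M)) (s : st M) {struct f} : Prop :=
  match f with
  | STrue => True
  | SAtom x => x \in lab M s
  | SNot f1 => ~ sat_s f1 s
  | SAnd f1 f2 => sat_s f1 s /\ sat_s f2 s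
  | SProb c p g =>
      exists (sg : scheduler M) (pi : nature M) (P : probability (pathspace (st M) s) R),
        is_path_measure sg pi s P /\
        cmp_sem c (P [set om : ipath (st M) s | sat_p g om]) (ratr (sval p))%:E
  end
with sat_p (g : pform (ap M)) (om : nat -> st M) {struct g} : Prop :=
  match g with
  | PNext f => sat_s f (om 1%N)
  | PBUntil f1 f2 k =>
      (* some i <= k (1-indexed), i.e. i < k (0-indexed) *)
      exists i, (i < k)%N /\ sat_s f2 (om i) /\
                forall j, (j < i)%N -> sat_s f1 (om j)
  | PUntil f1 f2 =>
      exists k, exists i, (i < k)%N /\ sat_s f2 (om i) /\
                forall j, (j < i)%N -> sat_s f1 (om j)
  end.

Definition coop_step (s : st M) (mu : st M -> R) : Prop :=
  exists (n : nat) (w : 'I_n -> R) (nu : 'I_n -> st M -> R),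
    (forall i, 0 <= w i) /\ \sum_(i < n) w i = 1 /\
    (forall i, exists a, Gamma s a (nu i)) /\
    (forall x, mu x = \sum_(i < n) w i * nu i x).

Definition is_equivalence (Rl : rel (st M)) : Prop :=
  (forall x, Rl x x) /\ (forall x y, Rl x y -> Rl y x) /\
  (forall x y z, Rl x y -> Rl y z -> Rl x z).

Definition class_mass (Rl : rel (st M)) (mu : st M -> R) (y : st M) : R :=
  \sum_(x | Rl y x) mu x.

Definition is_forall_bisim (Rl : rel (st M)) : Prop :=
  is_equivalence Rl /\
  forall s t, Rl s t ->
    lab M s = lab M t /\
    forall mu, coop_step s mu ->
      exists nu, coop_step t nu /\
        forall y, class_mass Rl mu y = class_mass Rl nu y.

Definition bisim_forall (s t : st M) : Prop :=
  exists Rl, is_forall_bisim Rl /\ Rl s t.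

End Semantics.

(* Main.v *)
Require Import Defs.
From HB Require Import structures.
From mathcomp Require Import all_boot all_order all_algebra.
From mathcomp Require Import all_classical all_reals all_analysis.
Set Implicit Arguments. Unset Strict Implicit. Unset Printing Implicit Defensive.
Import Order.TTheory GRing.Theory Num.Theory.
Local Open Scope classical_set_scope.
Local Open Scope ring_scope.
Notation fpth := Defs.fpath.
Section PathMeasure.
Variables (R : realType) (S : finType) (s0 : S) (q : fpth S -> S -> R).
Hypothesis hq : forall w, is_distr (q w).

Definition xsS := enum S.
Definition NS := size xsS.

Definition Cq w j := \sum_(0 <= i < j) q w (nth s0 xsS i).

Lemma Cq0 w : Cq w 0 = 0.
Proof. by rewrite /Cq big_geq. Qed.

Lemma CqS w j : Cq w j.+1 = Cq w j + q w (nth s0 xsS j).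
Proof. by rewrite /Cq big_nat_recr. Qed.

Lemma Cq_ge0 w j : 0 <= Cq w j.
Proof. by apply: sumr_ge0 => i _; case: (hq w) => h _; exact: h. Qed.

Lemma Cq_mono w i j : (i <= j)%N -> Cq w i <= Cq w j.
Proof.
move=> /subnKC <-; elim: (j - i)%N => [|k IH]; first by rewrite addn0.
rewrite addnS CqS (le_trans IH) // lerDl; case: (hq w) => h _; exact: h.
Qed.

Lemma CqN w : Cq w NS = 1.
Proof.
case: (hq w) => _ h1; rewrite -h1 /Cq /NS -(big_nth s0 predT (q w)).
by rewrite /xsS big_enum.
Qed.

Lemma index_ltN x : (index x xsS < NS)%N.
Proof. by rewrite /NS index_mem /xsS mem_enum. Qed.

Lemma nth_indexS x : nth s0 xsS (index x xsS) = x.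
Proof. by rewrite nth_index // /xsS mem_enum. Qed.

Definition pickx w lo len u :=
  nth s0 xsS (find (fun j => u < lo + len * Cq w j.+1) (iota 0 NS)).

Lemma pick_spec w lo len u x : 0 <= len -> lo <= u < lo + len ->
  (pickx w lo len u = x) <->
  (lo + len * Cq w (index x xsS) <= u < lo + len * Cq w (index x xsS).+1).
Proof.
move=> len0 /andP[ulo uhi].
set P := (fun j => u < lo + len * Cq w j.+1).
have hasP : has P (iota 0 NS).
  apply/hasP; exists NS.-1.
    rewrite mem_iota /= add0n prednK ?ltnSn //.
    by apply: (leq_ltn_trans _ (index_ltN s0)).
  rewrite /P prednK ?CqN ?mulr1 //.
  by apply: (leq_ltn_trans _ (index_ltN s0)).
have kN : (find P (iota 0 NS) < NS)%N by rewrite -[X in (_ < X)%N](size_iota 0) -has_find.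
have Pk := nth_find 0%N hasP.
rewrite nth_iota // add0n in Pk.
split.
- move=> <-; rewrite /pickx index_uniq ?enum_uniq //.
  apply/andP; split => //.
  case k0: (find P (iota 0 NS)) => [|k]; first by rewrite Cq0 mulr0 addr0.
  have : (k < find P (iota 0 NS))%N by rewrite k0.
  move/(before_find 0%N); rewrite nth_iota ?add0n; last first.
    by apply: ltn_trans kN; rewrite k0.
  by rewrite /P => /negbT; rewrite -leNgt.
- move=> /andP[h1 h2].
  have Pj : P (index x xsS) by [].
  suff e : find P (iota 0 NS) = index x xsS.
    by change (nth s0 xsS (find P (iota 0 NS)) = x); rewrite e nth_indexS.
  case: (ltngtP (find P (iota 0 NS)) (index x xsS)) => // hlt.
  + exfalso; move: Pk; rewrite /P => Pk.
    have : lo + len * Cq w (find P (iota 0 NS)).+1 <= lo + len * Cq w (index x xsS).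
      by rewrite lerD2l ler_wpM2l // Cq_mono.
    by move=> /(lt_le_trans Pk); rewrite ltNge h1.
  + have := before_find 0%N hlt; rewrite nth_iota ?add0n ?index_ltN //.
    by rewrite /P h2.
Qed.

Definition stepq u (st : fpth S * (R * R)) : fpth S * (R * R) :=
  let: (w, (lo, len)) := st in
  let x := pickx w lo len u in
  (fext w x, (lo + len * Cq w (index x xsS), len * q w x)).

Fixpoint stn u n : fpth S * (R * R) :=
  if n is n'.+1 then stepq u (stn u n') else ((s0, [::]), (0, 1)).

Lemma stnS u n : stn u n.+1 = stepq u (stn u n).
Proof. by []. Qed.

Definition good (p : R * R) := [/\ 0 <= p.1, 0 <= p.2 & p.1 + p.2 <= 1].

Lemma q_ge0 w x : 0 <= q w x.
Proof. by case: (hq w) => h _; exact: h. Qed.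

Lemma sub_itv w lo len x : 0 <= len ->
  lo <= lo + len * Cq w (index x xsS) /\
  lo + len * Cq w (index x xsS) + len * q w x <= lo + len.
Proof.
move=> len0; split; first by rewrite lerDl mulr_ge0 // Cq_ge0.
rewrite -addrA -mulrDr -{2}(nth_indexS x) -CqS lerD2l.
by rewrite -{2}(mulr1 len) ler_wpM2l // -(CqN w) Cq_mono // index_ltN.
Qed.

Lemma stn_good u n : good (stn u n).2.
Proof.
elim: n => [|n]; first by rewrite /good /= lexx ler01 add0r lexx.
rewrite stnS /stepq; case: (stn u n) => w [lo len] [/= h0 h1 h2].
have [s1 s2] := sub_itv w lo (pickx w lo len u) h1.
split => /=; [exact: le_trans s1| by rewrite mulr_ge0 // q_ge0|].
exact: le_trans s2 h2.
Qed.

Lemma stn_in u n : 0 <= u < 1 -> (stn u n).2.1 <= u < (stn u n).2.1 + (stn u n).2.2.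
Proof.
move=> u01; elim: n => [|n]; first by rewrite /= add0r.
have := stn_good u n.
rewrite stnS /stepq; case: (stn u n) => w [lo len] [/= h0 h1 h2] IH.
have := (@pick_spec w lo len u (pickx w lo len u) h1 IH).1 erefl.
by rewrite CqS nth_indexS mulrDr addrA.
Qed.

Lemma fext_inj (w1 w2 : fpth S) x1 x2 : fext w1 x1 = fext w2 x2 -> w1 = w2 /\ x1 = x2.
Proof.
case: w1 w2 => a1 l1 [a2 l2] [-> /rcons_inj [-> ->]]; by [].
Qed.

Lemma stn_det u v n : (stn u n).1 = (stn v n).1 -> stn u n = stn v n.
Proof.
elim: n => [//|n IH].
rewrite !stnS /stepq.
case eu: (stn u n) => [wu [lou lenu]]; case ev: (stn v n) => [wv [lov lenv]] /=.
move=> /fext_inj [ew ex].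
have : stn u n = stn v n by apply: IH; rewrite eu ev.
rewrite eu ev => -[? ? ?]; subst; by rewrite ex.
Qed.

Lemma stn_conv u v n : (stn v n).2.1 <= u < (stn v n).2.1 + (stn v n).2.2 ->
  stn u n = stn v n.
Proof.
elim: n v => [//|n IH] v.
have := stn_good v n.
rewrite !stnS /stepq.
case ev: (stn v n) => [w [lo len]] [/= h0 h1 h2].
set x := pickx w lo len v => /= /andP[hu1 hu2].
have [s1 s2] := sub_itv w lo x h1.
have H : lo <= u < lo + len.
  by rewrite (le_trans s1 hu1) /= (lt_le_trans hu2 s2).
have -> : stn u n = stn v n by apply: IH; rewrite ev.
have e : pickx w lo len u = x.
  apply/(@pick_spec w lo len u x h1 H); rewrite hu1 /=.
  by rewrite CqS nth_indexS mulrDr addrA.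
by rewrite ev /= e.
Qed.

Definition gp u i := flast (stn u i).1.

Lemma stn_fst u n : (stn u n).1 = (s0, mkseq (fun i => gp u i.+1) n).
Proof.
elim: n => [//|n IH].
rewrite mkseqS {2}/gp stnS /stepq.
case e: (stn u n) => [w [lo len]] /=.
rewrite e /= in IH; rewrite IH /fext /flast /= last_rcons.
by [].
Qed.

Lemma gp0 u : gp u 0 = s0.
Proof. by []. Qed.

Lemma gp_cyl u (w : fpth S) :
  cyl S s0 w (gp u) <-> (stn u (size w.2)).1 = w.
Proof.
case: w => w1 w2 /=; rewrite stn_fst; split.
- move=> H; have h0 := H 0%N (leq0n _); rewrite gp0 /= in h0.
  rewrite -h0; congr pair; apply: (@eq_from_nth _ s0); first by rewrite size_mkseq.
  move=> j; rewrite size_mkseq => jn; rewrite nth_mkseq //.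
  by rewrite (H j.+1 jn) /= h0.
- case=> <- <- [|j] /=; first by rewrite gp0.
  rewrite size_mkseq => jn; by rewrite nth_mkseq.
Qed.

Definition fu (u : R) : pathspace S s0 := gp (if (0 <= u) && (u < 1) then u else 0).

Definition set01 : set R := `[0%R, 1%R[.

Lemma in01 u : set01 u <-> 0 <= u < 1.
Proof. by rewrite /set01 /= in_itv. Qed.

Lemma preim01 (w : fpth S) :
  fu @^-1` cyl S s0 w `&` set01 = [set u | 0 <= u < 1 /\ (stn u (size w.2)).1 = w].
Proof.
apply/seteqP; split => u /=.
- move=> [H /in01 H01]; split => //; apply/gp_cyl; move: H; rewrite /fu H01.
  by [].
- move=> [H01 H]; split; last exact/in01.
  by rewrite /fu H01; apply/gp_cyl.
Qed.

Lemma preim_itv (w : fpth S) v : 0 <= v < 1 -> (stn v (size w.2)).1 = w ->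
  [set u | 0 <= u < 1 /\ (stn u (size w.2)).1 = w] =
  `[(stn v (size w.2)).2.1, (stn v (size w.2)).2.1 + (stn v (size w.2)).2.2[%classic.
Proof.
move=> v01 hv; set n := size w.2.
have [g0 g1 g2] := stn_good v n.
apply/seteqP; split => u /=.
- move=> [u01 hu]; rewrite in_itv /=.
  have e : stn u n = stn v n by apply: stn_det; rewrite hu hv.
  by rewrite -e; apply: stn_in.
- rewrite in_itv /= => hu.
  have e := stn_conv hu.
  move/andP: hu => [hu1 hu2].
  split; last by rewrite e.
  by rewrite (le_trans g0 hu1) (lt_le_trans hu2 g2).
Qed.

Lemma preim_empty (w : fpth S) : ~ (exists v, 0 <= v < 1 /\ (stn v (size w.2)).1 = w) ->
  [set u | 0 <= u < 1 /\ (stn u (size w.2)).1 = w] = set0.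
Proof.
move=> H; apply/seteqP; split => u //= hu; apply: H; by exists u.
Qed.

Lemma meas_preim01 (w : fpth S) :
  measurable [set u : R | 0 <= u < 1 /\ (stn u (size w.2)).1 = w].
Proof.
have [[v [v01 hv]]|H] := pselect (exists v, 0 <= v < 1 /\ (stn v (size w.2)).1 = w).
- by rewrite (preim_itv v01 hv); exact: measurable_itv.
- by rewrite preim_empty.
Qed.

Lemma measurable_fu : measurable_fun [set: R] fu.
Proof.
apply: (@measurability _ _ _ (pathspace S s0) _ _ (cyls S s0)) => //.
move=> _ [_ [w ->] <-].
have -> : [set: R] `&` fu @^-1` cyl S s0 w =
  (fu @^-1` cyl S s0 w `&` set01) `|` (~` set01 `&` [set _ : R | (stn 0 (size w.2)).1 = w]).
  apply/seteqP; split => u /=.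
  - move=> [_ H]; have [h01|h01] := pselect (set01 u); [left|right] => //.
    split => //; apply/gp_cyl; move: H; rewrite /fu.
    by move/in01: h01; case: ((0 <= u) && (u < 1)).
  - case=> [[H _]|[h01 H]]; split => //.
    rewrite /fu; apply/gp_cyl.
    suff -> : ((0 <= u) && (u < 1)) = false by [].
    by apply/negbTE/negP => /in01.
apply: measurableU; first by rewrite preim01; exact: meas_preim01.
apply: measurableI; first by apply: measurableC; exact: measurable_itv.
have [h|h] := pselect ((stn 0 (size w.2)).1 = w).
- have -> : [set _ : R | (stn 0 (size w.2)).1 = w] = setT by apply/seteqP; split.
  exact: measurableT.
- have -> : [set _ : R | (stn 0 (size w.2)).1 = w] = set0 by apply/seteqP; split.
  exact: measurable0.
Qed.

Local Open Scope ereal_scope.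
Definition Pm (A : set (pathspace S s0)) : \bar R :=
  lebesgue_measure (fu @^-1` A `&` set01).

Lemma Pm0 : Pm set0 = 0.
Proof. by rewrite /Pm preimage_set0 set0I measure0. Qed.

Lemma Pm_ge0 A : 0 <= Pm A.
Proof. exact: measure_ge0. Qed.

Lemma meas_pre (A : set (pathspace S s0)) : measurable A ->
  measurable (fu @^-1` A `&` set01).
Proof.
move=> mA; apply: measurableI; last exact: measurable_itv.
by rewrite -[X in measurable X]setTI; apply: measurable_fu.
Qed.

Lemma Pm_sigma : semi_sigma_additive Pm.
Proof.
move=> F mF tF mUF; rewrite /Pm preimage_bigcup setI_bigcupl.
apply: (@measure_semi_sigma_additive _ _ _ (@lebesgue_measure R) (fun n => fu @^-1` F n `&` set01)).
- by move=> n; apply: meas_pre.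
- apply/trivIsetP => i j _ _ ij.
  move/trivIsetP: tF => /(_ i j I I ij) h.
  apply/seteqP; split => u //= [[h1 _] [h2 _]].
  have : (F i `&` F j) (fu u) by [].
  by rewrite h.
- by rewrite -setI_bigcupl -preimage_bigcup; apply: meas_pre.
Qed.

HB.instance Definition _ := isMeasure.Build _ _ _ Pm Pm0 Pm_ge0 Pm_sigma.

Lemma Pm_setT : Pm setT = 1.
Proof.
rewrite /Pm preimage_setT setTI /set01 lebesgue_measure_itv /= lte_fin ltr01.
by rewrite -EFinB subr0.
Qed.

HB.instance Definition _ := Measure_isProbability.Build _ _ _ Pm Pm_setT.

Definition Pprob : probability (pathspace S s0) R := Pm.

Lemma Pm_cyl_some (w : fpth S) v : (0 <= v < 1)%R -> (stn v (size w.2)).1 = w ->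
  Pm (cyl S s0 w) = ((stn v (size w.2)).2.2)%:E.
Proof.
move=> v01 hv; rewrite /Pm preim01 (preim_itv v01 hv) lebesgue_measure_itv /=.
have [g0 g1 g2] := stn_good v (size w.2).
rewrite lte_fin ltrDl; case: ltP => h.
  by rewrite -EFinB addrAC subrr add0r.
by congr EFin; apply/eqP; rewrite eq_le g1 h.
Qed.

Lemma Pm_cyl_none (w : fpth S) :
  ~ (exists v, (0 <= v < 1)%R /\ (stn v (size w.2)).1 = w) -> Pm (cyl S s0 w) = 0.
Proof. by move=> H; rewrite /Pm preim01 preim_empty // measure0. Qed.

Lemma Pm_init x : Pm (cyl S s0 (x, [::])) = (if x == s0 then 1 else 0)%:E.
Proof.
case: eqP => [->|hx].
  by rewrite (@Pm_cyl_some _ 0%R) //= ?lexx ?ltr01.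
rewrite Pm_cyl_none // => -[v [_ /= [h]]]; by apply: hx.
Qed.

Lemma Pm_ext (w : fpth S) x : Pm (cyl S s0 (fext w x)) = Pm (cyl S s0 w) * (q w x)%:E.
Proof.
have sz : size (fext w x).2 = (size w.2).+1 by rewrite /= size_rcons.
have [[v [v01 hv]]|H] := pselect (exists v, (0 <= v < 1)%R /\ (stn v (size w.2)).1 = w).
- rewrite (Pm_cyl_some v01 hv).
  have [[v' [v01' hv']]|H'] := pselect (exists v, (0 <= v < 1)%R /\ (stn v (size (fext w x).2)).1 = fext w x).
  + rewrite (Pm_cyl_some v01' hv').
    move: hv'; rewrite sz stnS /stepq.
    case e: (stn v' (size w.2)) => [w' [lo len]] /= /fext_inj [ew ex].
    have e2 : stn v' (size w.2) = stn v (size w.2) by apply: stn_det; rewrite e ew hv.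
    by rewrite -e2 e /= ex ew EFinM.
  + rewrite Pm_cyl_none //.
    have [g0 g1 g2] := stn_good v (size w.2).
    case ev: (stn v (size w.2)) => [w0 [lo len]]; rewrite ev /= in hv g0 g1 g2 *.
    subst w0.
    have [s1 s2] := sub_itv w lo x g1.
    have [e0|qpos] := eqVneq (len * q w x)%R 0%R.
      by rewrite -EFinM e0.
    exfalso; apply: H'.
    set u := (lo + len * Cq w (index x xsS))%R.
    have lenq : (0 < len * q w x)%R by rewrite lt0r qpos mulr_ge0 // q_ge0.
    have hu : (lo <= u < lo + len)%R.
      by rewrite s1 /= (lt_le_trans _ s2) // ltrDl.
    exists u; split.
      by rewrite (le_trans g0 s1) /= (lt_le_trans _ g2) // (lt_le_trans _ s2) // ltrDl.
    rewrite sz stnS.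
    have -> : stn u (size w.2) = stn v (size w.2) by apply: stn_conv; rewrite ev.
    rewrite ev /stepq.
    have -> : pickx w lo len u = x.
      apply/(@pick_spec w lo len u x g1 hu).
      by rewrite lexx /= CqS nth_indexS mulrDr addrA ltrDl.
    by [].
- rewrite [X in _ = X * _](Pm_cyl_none H) mul0e; apply: Pm_cyl_none.
  move=> [v [v01 hv]]; apply: H; exists v; split => //.
  move: hv; rewrite sz stnS /stepq.
  case e: (stn v (size w.2)) => [w' [lo len]] /= /fext_inj [ew _].
  by rewrite -ew.
Qed.

End PathMeasure.

Lemma path_measure_exists (R : realType) (S : finType) (s0 : S)
  (q : fpth S -> S -> R) : (forall w, is_distr (q w)) ->
  exists P : probability (pathspace S s0) R,
    (forall x, P (cyl S s0 (x, [::])) = (if x == s0 then 1 else 0)%:E) /\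
    (forall w x, P (cyl S s0 (fext w x)) = (P (cyl S s0 w) * (q w x)%:E)%E).
Proof.
move=> hq; exists (Pprob s0 hq); split.
- exact: Pm_init.
- exact: Pm_ext.
Qed.

Section Convex.
Variables (R : realType) (M : imdp R).
Local Notation S := (st M).
Local Notation A := (act M).

Lemma itv_convex (K : finType) (P : pred K) (c v : K -> R) (i : interval R) :
  (forall k, P k -> 0 <= c k) -> \sum_(k | P k) c k = 1 ->
  (forall k, P k -> v k \in i) -> \sum_(k | P k) c k * v k \in i.
Proof.
move=> c0 c1 vi.
have [k0 Pk0] : exists k, P k.
  apply/existsP; apply/negP => /existsP H.
  move: c1; rewrite big_pred0; first by move/eqP; rewrite eq_sym oner_eq0.
  by move=> k; apply/negP => Pk; apply: H; exists k.
have hreal : {in P, forall k, v k \is Num.real} by move=> k _; exact: num_real.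
case: (real_arg_minP Pk0 hreal) => kmin Pmin Hmin.
case: (real_arg_maxP Pk0 hreal) => kmax Pmax Hmax.
have hI := @interval_is_interval R i.
apply: (hI (v kmin) (v kmax)); rewrite /= ?vi //.
apply/andP; split.
- rewrite -[X in X <= _]mul1r -c1 mulr_suml; apply: ler_sum => k Pk.
  by rewrite ler_wpM2l ?c0 // Hmin.
- rewrite -[X in _ <= X]mul1r -c1 mulr_suml; apply: ler_sum => k Pk.
  by rewrite ler_wpM2l ?c0 //; apply: Hmax.
Qed.

Lemma gamma_convex (K : finType) (P : pred K) (c : K -> R) (nu : K -> S -> R) x a :
  (forall k, P k -> 0 <= c k) -> \sum_(k | P k) c k = 1 ->
  (forall k, P k -> Gamma x a (nu k)) ->
  Gamma x a (fun y => \sum_(k | P k) c k * nu k y).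
Proof.
move=> c0 c1 hnu; split; [split|].
- move=> y; apply: sumr_ge0 => k Pk; rewrite mulr_ge0 ?c0 //.
  by case: (hnu k Pk) => [[h _] _]; exact: h.
- rewrite exchange_big /= -[RHS]c1; apply: eq_bigr => k Pk.
  by rewrite -mulr_sumr; case: (hnu k Pk) => [[_ ->] _]; rewrite mulr1.
- move=> y; apply: itv_convex => // k Pk.
  by case: (hnu k Pk) => _ /(_ y).
Qed.

Definition AF (x : S) (mu : S -> R) : Prop :=
  exists (sg : A -> R) (pi : A -> S -> R), is_distr sg /\
    (forall a, Gamma x a (pi a)) /\ forall y, mu y = \sum_a sg a * pi a y.

Lemma AF_coop (K : finType) (c : K -> R) (nu : K -> S -> R) (ak : K -> A) x mu :
  (forall k, 0 <= c k) -> \sum_k c k = 1 -> (forall k, Gamma x (ak k) (nu k)) ->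
  (forall y, mu y = \sum_k c k * nu k y) -> coop_step x mu.
Proof.
move=> c0 c1 hnu hmu.
exists #|K|, (fun i => c (enum_val i)), (fun i => nu (enum_val i)).
split; [by move=> i|split; [|split]].
- by rewrite -c1 [RHS]big_enum_val.
- by move=> i; exists (ak (enum_val i)).
- by move=> y; rewrite hmu [LHS]big_enum_val.
Qed.

Lemma coop_AF x mu : coop_step x mu -> AF x mu.
Proof.
move=> [n [w [nu [w0 [w1 [hnu hmu]]]]]].
have [ak hak] := choice hnu.
have [gam hgam] := choice (fun a => gamma_nonempty (x, a).1 a).
set sg := fun a => \sum_(i | ak i == a) w i.
have sg0 a : 0 <= sg a by apply: sumr_ge0.
have sum_part (F : 'I_n -> R) : \sum_i F i = \sum_a \sum_(i | ak i == a) F i.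
  by rewrite (partition_big ak xpredT).
exists sg, (fun a y => if sg a == 0 then gam a y
  else \sum_(i | ak i == a) (w i / sg a) * nu i y).
split; [split => // |split].
- by rewrite -w1 sum_part.
- move=> a; case: eqP => [_|/eqP sgn0]; first exact: hgam.
  apply: (gamma_convex (c := fun i => w i / sg a)).
  + by move=> i _; rewrite divr_ge0.
  + by rewrite -mulr_suml divff.
  + by move=> i /eqP <-; exact: hak.
- move=> y; rewrite hmu sum_part; apply: eq_bigr => a _.
  case: eqP => [sg00|/eqP sgn0].
  + rewrite sg00 mul0r; apply: big1 => i /eqP aki.
    have := psumr_eq0P (fun i _ => w0 i) sg00; move=> /(_ i).
    by rewrite aki eqxx => ->; rewrite ?mul0r.
  + rewrite mulr_sumr; apply: eq_bigr => i _.
    by rewrite mulrA mulrCA divff ?mulr1.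
Qed.

Lemma coop_convex (K : finType) (P : pred K) (c : K -> R) (nu : K -> S -> R) x :
  (forall k, P k -> 0 <= c k) -> \sum_(k | P k) c k = 1 ->
  (forall k, P k -> coop_step x (nu k)) ->
  coop_step x (fun y => \sum_(k | P k) c k * nu k y).
Proof.
move=> c0 c1 hnu.
have [gam hgam] := choice (fun a => gamma_nonempty x a).
have : forall k, exists sp : (A -> R) * (A -> S -> R),
    (forall a, Gamma x a (sp.2 a)) /\
    (P k -> is_distr sp.1 /\ forall y, nu k y = \sum_a sp.1 a * sp.2 a y).
  move=> k; have [Pk|nPk] := boolP (P k).
  - have [sg [pi [h1 [h2 h3]]]] := coop_AF (hnu k Pk).
    by exists (sg, pi); split.
  - by exists (fun _ => 0, gam); split => // /negP.
move=> /choice [sp hsp].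
apply: (@AF_coop _ (fun ka => if P ka.1 then c ka.1 * (sp ka.1).1 ka.2 else 0)
  (fun ka => (sp ka.1).2 ka.2) (fun ka => ka.2)).
- move=> [k a] /=; case: ifP => // Pk; rewrite mulr_ge0 ?c0 //.
  by case: (hsp k) => _ /(_ Pk) [[h _] _]; exact: h.
- rewrite -c1 -(pair_bigA _ (fun k a => if P k then c k * (sp k).1 a else 0)) /=.
  rewrite [RHS]big_mkcond; apply: eq_bigr => k _; case: ifP => Pk.
  + by rewrite -mulr_sumr; case: (hsp k) => _ /(_ Pk) [[_ ->] _]; rewrite mulr1.
  + by rewrite big1.
- by move=> [k a]; case: (hsp k) => h _; exact: h.
- move=> y; rewrite -(pair_bigA _ (fun k a => (if P k then c k * (sp k).1 a else 0) * (sp k).2 a y)) /=.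
  rewrite [LHS]big_mkcond; apply: eq_bigr => k _; case: ifP => Pk.
  + case: (hsp k) => _ /(_ Pk) [_ ->]; rewrite mulr_sumr; apply: eq_bigr => a _.
    by rewrite mulrA.
  + by rewrite big1 // => a _; rewrite mul0r.
Qed.

End Convex.

Section Paths.
Variables (R : realType) (M : imdp R).
Local Notation S := (st M).
Local Notation A := (act M).

Definition PT n := (S * n.-tuple S)%type.
Definition topath n (p : PT n) : fpth S := (p.1, tval p.2).

Lemma mkrt_proof n (t : n.-tuple S) y : size (rcons t y) == n.+1.
Proof. by rewrite size_rcons size_tuple. Qed.
Definition mkrt n (t : n.-tuple S) y : n.+1.-tuple S := Tuple (mkrt_proof t y).

Lemma sum_tuple_rcons n (H : n.+1.-tuple S -> R) :
  \sum_(t' : n.+1.-tuple S) H t' = \sum_(t : n.-tuple S) \sum_y H (mkrt t y).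
Proof.
rewrite pair_bigA /=.
pose g (t' : n.+1.-tuple S) : n.-tuple S * S :=
  (insubd (nseq_tuple n (thead t')) (take n t'), last (thead t') t').
rewrite (reindex (fun ty : n.-tuple S * S => mkrt ty.1 ty.2)) //.
exists g => [[t y] _|t' _].
- rewrite /g /=; congr pair.
  + have e : take n (rcons (tval t) y) = tval t by rewrite -cats1 (@take_size_cat _ n (tval t) [:: y] (size_tuple t)).
    by rewrite e valKd.
  + by rewrite last_rcons.
- apply: val_inj => /=; rewrite /g /=.
  case: t' => s' hs' /=.
  move: hs'; case/lastP: s' => [//|s1 z] hs'.
  have hs1 : size s1 = n by move: hs'; rewrite size_rcons => /eqP [].
  rewrite insubdK; last by rewrite -topredE /= size_takel // size_rcons hs1.
  have e : take n (rcons s1 z) = s1 by rewrite -cats1 take_size_cat.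
  by rewrite e last_rcons.
Qed.

Lemma sum_ext n (F : fpth S -> R) :
  \sum_(p : PT n.+1) F (topath p) = \sum_(p : PT n) \sum_y F (fext (topath p) y).
Proof.
transitivity (\sum_x \sum_(t : n.+1.-tuple S) F (x, tval t)).
  by rewrite pair_bigA.
transitivity (\sum_x \sum_(t : n.-tuple S) \sum_y F (fext (x, tval t) y)).
  by apply: eq_bigr => x _; rewrite sum_tuple_rcons.
by rewrite pair_bigA.
Qed.

End Paths.

Section Emul.
Variables (R : realType) (M : imdp R).
Local Notation S := (st M).
Local Notation A := (act M).
Variable Rl : rel S.
Hypothesis hRl : is_equivalence Rl.

Definition rep (x : S) : S := odflt x [pick y | Rl x y].

Lemma rep_rel x : Rl x (rep x).
Proof. by rewrite /rep; case: pickP => [y ->|/(_ x)] //; case: hRl => ->. Qed.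

Lemma rep_eq x y : (rep x == rep y) = Rl x y.
Proof.
case: hRl => refl [sym tr].
apply/idP/idP.
- move/eqP => e; apply: (tr _ (rep x)); first exact: rep_rel.
  by rewrite e; apply: sym; exact: rep_rel.
- move=> xy; rewrite /rep (@eq_pick _ (fun z => Rl x z) (fun z => Rl y z)).
    case: pickP => [//|/(_ y)]; by rewrite refl.
  move=> z /=; apply/idP/idP => h; first by apply: tr h; exact: sym.
  exact: tr h.
Qed.

Definition reppath (w : fpth S) : fpth S := (rep w.1, map rep w.2).

Definition cm (mu : S -> R) y := \sum_(y' | rep y' == rep y) mu y'.

Lemma cm_class mu y : class_mass Rl mu y = cm mu y.
Proof. by apply: eq_bigl => x; rewrite eq_sym rep_eq. Qed.

Definition Qc (Q : fpth S -> R) n (h : fpth S) :=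
  \sum_(p : PT M n | reppath (topath p) == reppath h) Q (topath p).

Lemma reppath_fext w y : reppath (fext w y) = fext (reppath w) (rep y).
Proof. by rewrite /reppath /fext /= map_rcons. Qed.

Lemma fext_eq (w1 w2 : fpth S) y1 y2 : (fext w1 y1 == fext w2 y2) = (w1 == w2) && (y1 == y2).
Proof. by case: w1 w2 => a1 l1 [a2 l2]; rewrite /fext !xpair_eqE eqseq_rcons andbA. Qed.

Lemma Qc_ext (Q : fpth S -> R) (mu : fpth S -> S -> R) n h y :
  (forall w y, Q (fext w y) = Q w * mu w y) ->
  Qc Q n.+1 (fext h y) =
  \sum_(p : PT M n | reppath (topath p) == reppath h) Q (topath p) * cm (mu (topath p)) y.
Proof.
move=> Qe; rewrite /Qc big_mkcond.
have E := sum_ext n (fun w => if reppath w == reppath (fext h y) then Q w else 0).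
cbv beta in E; rewrite E [RHS]big_mkcond; apply: eq_bigr => p _.
have e y' : (reppath (fext (topath p) y') == reppath (fext h y)) =
   (reppath (topath p) == reppath h) && (rep y' == rep y).
  by rewrite !reppath_fext fext_eq.
under eq_bigr => y' _ do rewrite e.
case: eqP => _ /=.
- rewrite /cm mulr_sumr [RHS]big_mkcond; apply: eq_bigr => y' _.
  by rewrite Qe.
- by rewrite big1.
Qed.

Lemma Qc_rep Q n h1 h2 : reppath h1 = reppath h2 -> Qc Q n h1 = Qc Q n h2.
Proof. by rewrite /Qc => ->. Qed.

Lemma rep_flast w : rep (flast w) = flast (reppath w).
Proof. by rewrite /flast /reppath /= last_map. Qed.


Hypothesis BS : forall x y, Rl x y -> forall mu, coop_step x mu ->
  exists nu, coop_step y nu /\ forall z, class_mass Rl mu z = class_mass Rl nu z.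

Lemma Qc_base (Q : fpth S -> R) u h :
  (forall x, Q (x, [::]) = if x == u then 1 else 0) ->
  Qc Q 0 h = if reppath (u, [::]) == reppath h then 1 else 0.
Proof.
move=> hQ; rewrite /Qc big_mkcond (bigD1 (u, [tuple])) //= hQ (eqxx u) big1 ?addr0.
  by case: ifP.
move=> [x tt] /=; rewrite (tuple0 tt) => ne; rewrite hQ.
case: eqP ne => [-> /negP H|]; first by exfalso; apply: H; apply/eqP.
case: ifP => // _ hne _ /=; case: eqP => // exu; by case: hne; rewrite exu.
Qed.

Lemma Qc_nil (Q : fpth S -> R) n x : Qc Q n.+1 (x, [::]) = 0.
Proof.
apply: big1 => p /eqP [_ /(congr1 size)].
by rewrite size_map size_tuple.
Qed.

Lemma emulate (s t : S) (hst : Rl s t) (mu : fpth S -> S -> R)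
  (hmu : forall w, coop_step (flast w) (mu w)) (Q : fpth S -> R)
  (Q0 : forall x, Q (x, [::]) = if x == s then 1 else 0)
  (Qe : forall w y, Q (fext w y) = Q w * mu w y) (Qp : forall w, 0 <= Q w) :
  exists nu : fpth S -> S -> R, (forall w, coop_step (flast w) (nu w)) /\
   forall Q' : fpth S -> R, (forall x, Q' (x, [::]) = if x == t then 1 else 0) ->
    (forall w y, Q' (fext w y) = Q' w * nu w y) -> (forall w, 0 <= Q' w) ->
    forall n h, Qc Q n h = Qc Q' n h.
Proof.
have : forall vw : fpth S * fpth S, exists nu : S -> R,
   Rl (flast vw.1) (flast vw.2) ->
   coop_step (flast vw.2) nu /\ forall z, cm (mu vw.1) z = cm nu z.
  move=> [v w] /=; have [r|nr] := boolP (Rl (flast v) (flast w)).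
  - have [nu [h1 h2]] := BS r (hmu v); exists nu => _; split => // z.
    by rewrite -!cm_class.
  - by exists (fun _ => 0).
move=> /choice [nu' hnu'].
have [a0 _] : exists a : A, True.
  have [sg [pi [[_ sg1] _]]] := coop_AF (hmu (s, [::])).
  case: (pickP (fun _ : A => true)) => [a _|H]; first by exists a.
  by move: sg1; rewrite big_pred0 // => /eqP; rewrite eq_sym oner_eq0.
have [gam hgam] := choice (fun xa : S * A => gamma_nonempty xa.1 xa.2).
pose nun n (w : fpth S) : S -> R :=
  if Qc Q n w != 0 then
    (fun y => \sum_(p : PT M n | reppath (topath p) == reppath w)
      (Q (topath p) / Qc Q n w) * nu' (topath p, w) y)
  else gam (flast w, a0).
have Qc0 n w : 0 <= Qc Q n w by apply: sumr_ge0 => p _.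
exists (fun w => nun (size w.2) w); split.
  move=> w; rewrite /nun; case: ifP => [qn0|_].
  + apply: coop_convex => [p _ | | p hp].
    * by rewrite divr_ge0.
    * by rewrite -mulr_suml divff.
    * have r : Rl (flast (topath p)) (flast w) by rewrite -rep_eq !rep_flast (eqP hp).
      by case: (hnu' (topath p, w) r).
  + exists 1%N, (fun _ => 1), (fun _ => gam (flast w, a0)).
    split => //; split; first by rewrite big_ord1.
    split; first by move=> _; exists a0; exact: (hgam (flast w, a0)).
    by move=> y; rewrite big_ord1 mul1r.
move=> Q' Q'0 Q'e Q'p; elim => [|n IH] h.
  rewrite (Qc_base _ Q0) (Qc_base _ Q'0).
  have e : rep s = rep t by apply/eqP; rewrite rep_eq.
  by rewrite /reppath /= e.
case: h => x l; case/lastP: l => [|l y]; first by rewrite !Qc_nil.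
set h0 := (x, l).
change (Qc Q n.+1 (fext h0 y) = Qc Q' n.+1 (fext h0 y)).
rewrite [RHS](Qc_ext n h0 y Q'e).
have [z|nz] := eqVneq (Qc Q n h0) 0.
  rewrite (Qc_ext n h0 y Qe) !big1 // => p cl.
    have := psumr_eq0P (fun p _ => Q'p (topath p)) (etrans (esym (IH h0)) z).
    by move=> /(_ p cl) ->; rewrite mul0r.
  have := psumr_eq0P (fun p _ => Qp (topath p)) z.
  by move=> /(_ p cl) ->; rewrite mul0r.
set X := Qc Q n.+1 (fext h0 y).
have key : forall p : PT M n, reppath (topath p) == reppath h0 ->
    cm (nun (size (topath p).2) (topath p)) y = X / Qc Q n h0.
  move=> p cl; have eQc : Qc Q n (topath p) = Qc Q n h0 := Qc_rep Q n (eqP cl).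
  rewrite /= size_tuple /nun eQc nz /cm exchange_big /=.
  rewrite /X (Qc_ext n h0 y Qe) mulr_suml; apply: eq_big.
    by move=> p'; rewrite (eqP cl).
  move=> p' cl'; rewrite -mulr_sumr.
  have r : Rl (flast (topath p')) (flast (topath p)).
    by rewrite -rep_eq !rep_flast (eqP cl') (eqP cl).
  case: (hnu' (topath p', topath p) r) => _ /(_ y); rewrite /cm => <-.
  by rewrite mulrAC.
transitivity (\sum_(p : PT M n | reppath (topath p) == reppath h0)
                 Q' (topath p) * (X / Qc Q n h0)).
  by rewrite -mulr_suml -/(Qc Q' n h0) -IH mulrC divfK.
by apply: eq_bigr => p cl; rewrite key.
Qed.


Lemma sumG_eq (Q Q' : fpth S -> R) n (G : fpth S -> Prop) :
  (forall h, Qc Q n h = Qc Q' n h) ->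
  (forall w w', reppath w = reppath w' -> G w -> G w') ->
  \sum_(p : PT M n | `[< G (topath p) >]) Q (topath p) =
  \sum_(p : PT M n | `[< G (topath p) >]) Q' (topath p).
Proof.
move=> hQ hG.
pose rpP (p : PT M n) : PT M n := (rep p.1, map_tuple rep p.2).
have rpPE p p' : (rpP p == rpP p') = (reppath (topath p) == reppath (topath p')).
  by rewrite /rpP /reppath /topath /= !xpair_eqE.
rewrite (partition_big rpP xpredT) // [RHS](partition_big rpP xpredT) //.
apply: eq_bigr => k _.
have [[p0 [Gp0 e0]]|nex] := pselect (exists p0, G (topath p0) /\ rpP p0 = k).
- have E (F : fpth S -> R) :
      \sum_(p | `[< G (topath p) >] && (rpP p == k)) F (topath p) = Qc F n (topath p0).
    rewrite /Qc; apply: eq_bigl => p; rewrite -e0 rpPE.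
    case: eqP => [e|]; last by rewrite andbF.
    by rewrite andbT; apply/asboolP; exact: (hG _ _ (esym e) Gp0).
  by rewrite !E.
- rewrite !big_pred0 // => p; apply/negP => /andP [/asboolP Gp /eqP e];
    apply: nex; by exists p.
Qed.

Lemma rep_nth (x0 : S) s i : rep (nth x0 s i) = nth (rep x0) (map rep s) i.
Proof. by elim: s i => [|a s IH] [|i] //=. Qed.

Definition at_ (w : fpth S) i := nth w.1 (w.1 :: w.2) i.

Lemma rep_at w w' i : reppath w = reppath w' -> Rl (at_ w i) (at_ w' i).
Proof.
move=> e; rewrite -rep_eq /at_ !rep_nth.
by case: e => e1 e2 /=; rewrite e1 e2.
Qed.

End Emul.

Section Decomp.
Variables (R : realType) (M : imdp R).
Local Notation S := (st M).

Definition pre (om : nat -> S) n : fpth S := (om 0%N, mkseq (fun i => om i.+1) n).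

Lemma cyl_pre (s0 : S) (om : ipath S s0) (w : fpth S) :
  cyl S s0 w om <-> pre om (size w.2) = w.
Proof.
case: w => w1 w2 /=; rewrite /pre; split.
- move=> H; have h0 := H 0%N (leq0n _); rewrite /= in h0.
  rewrite h0; congr pair; apply: (@eq_from_nth _ w1); first by rewrite size_mkseq.
  move=> j; rewrite size_mkseq => jn; rewrite nth_mkseq //.
  by rewrite (H j.+1 jn).
- case=> <- <- [|j] //=.
  rewrite size_mkseq => jn; by rewrite nth_mkseq.
Qed.

Lemma at_pre (om : nat -> S) n i : (i <= n)%N -> at_ (pre om n) i = om i.
Proof. by case: i => [//|i] /= lt; rewrite /at_ /= nth_mkseq. Qed.

Lemma topath_inj n (p p' : PT M n) : topath p = topath p' -> p = p'.
Proof.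
case: p p' => a t [a' t'] [-> e]; congr pair; exact: val_inj.
Qed.

Lemma cyl_meas (s0 : S) (w : fpth S) : measurable (cyl S s0 w : set (pathspace S s0)).
Proof. by apply: sub_sigma_algebra; exists w. Qed.

Local Open Scope ereal_scope.

Lemma fin_union (s0 : S) (P : {measure set (pathspace S s0) -> \bar R}) n
   (b : pred (PT M n)) (s : seq (PT M n)) : uniq s ->
  let U := [set om : pathspace S s0 | exists p, [/\ p \in s, b p & cyl S s0 (topath p) om]] in
  measurable U /\ P U = \sum_(p <- s | b p) P (cyl S s0 (topath p)).
Proof.
elim: s => [|x s IH] /=.
  have -> : [set om : pathspace S s0 | exists p, [/\ p \in [::], b p & cyl S s0 (topath p) om]] = set0.
    by apply/seteqP; split => om // [p []].
  by rewrite big_nil measure0.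
move=> /andP [xs us]; have [mU PU] := IH us.
set U := [set om : pathspace S s0 | exists p, [/\ p \in s, b p & cyl S s0 (topath p) om]] in mU PU.
rewrite big_cons; case: ifP => bx.
- have -> : [set om : pathspace S s0 | exists p, [/\ p \in x :: s, b p & cyl S s0 (topath p) om]]
     = (cyl S s0 (topath x) : set (pathspace S s0)) `|` U.
    apply/seteqP; split => om /=.
    + move=> [p [+ bp cp]]; rewrite in_cons => /orP [/eqP ep|ps].
        by left; rewrite -ep.
      by right; exists p.
    + case=> [cx|[p [ps bp cp]]]; first by exists x; rewrite mem_head.
      by exists p; rewrite in_cons ps orbT.
  have HH := @measurableU _ (pathspace S s0) _ _ (@cyl_meas s0 (topath x)) mU.

  split; first exact: HH.
  rewrite (measureU P (@cyl_meas s0 (topath x)) mU); first by rewrite -PU.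
  apply/seteqP; split => om // [cx [p [ps bp cp]]].
  move/cyl_pre: cx; move/cyl_pre: cp; rewrite !size_tuple => -> /topath_inj ex.
  by move: xs; rewrite -ex ps.
- have -> : [set om : pathspace S s0 | exists p, [/\ p \in x :: s, b p & cyl S s0 (topath p) om]]
     = U.
    apply/seteqP; split => om /=.
    + move=> [p [+ bp cp]]; rewrite in_cons => /orP [/eqP ex|ps].
      * by rewrite ex bx in bp.
      * by exists p.
    + by move=> [p [ps bp cp]]; exists p; rewrite in_cons ps orbT.
  by [].
Qed.

Lemma measure_decomp (s0 : S) (P : probability (pathspace S s0) R) (G : nat -> fpth S -> Prop) :
  (forall om n m, G n (pre om n) -> G m (pre om m) -> n = m) ->
  P [set om | exists n, G n (pre om n)] =
  \sum_(n <oo) \sum_(p : PT M n | `[< G n (topath p) >]) P (cyl S s0 (topath p)).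
Proof.
move=> uniqG.
pose F n := [set om : pathspace S s0 | exists p : PT M n,
  [/\ p \in index_enum (PT M n), `[< G n (topath p) >] & cyl S s0 (topath p) om]].
have eqU : [set om : pathspace S s0 | exists n, G n (pre om n)] = \bigcup_n F n.
  apply/seteqP; split => om /=.
  - move=> [n Gn]; exists n => //.
    pose t := insubd (nseq_tuple n (om 0%N)) (mkseq (fun i => om i.+1) n).
    have tE : tval t = mkseq (fun i => om i.+1) n.
      by rewrite insubdK // -topredE /= size_mkseq.
    have pE : topath ((om 0%N, t) : PT M n) = pre om n by rewrite /topath /= tE.
    exists (om 0%N, t); split; first by rewrite mem_index_enum.
      by apply/asboolP; rewrite pE.
    by apply/cyl_pre; rewrite size_tuple pE.
  - move=> [n _ [p [_ /asboolP Gp /cyl_pre]]]; rewrite size_tuple => e.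
    by exists n; rewrite e.
have FU n := fin_union P (fun p => `[< G n (topath p) >]) (index_enum_uniq (PT M n)).
rewrite eqU measure_bigcup //.
- rewrite (@eq_eseriesl _ _ (fun _ => true)); last by move=> i; rewrite in_setT.
  apply: eq_eseriesr => n _; rewrite (FU n).2 //.
- by move=> n _; exact: (FU n).1.
- apply/trivIsetP => i j _ _ ij; apply/seteqP; split => om // [].
  move=> [p [_ /asboolP Gp /cyl_pre]]; rewrite size_tuple => ep.
  move=> [p' [_ /asboolP Gp' /cyl_pre]]; rewrite size_tuple => ep'.
  rewrite -ep in Gp; rewrite -ep' in Gp'.
  by move/eqP: ij; apply; exact: uniqG Gp Gp'.
Qed.

End Decomp.

Scheme sform_ind2 := Induction for sform Sort Prop
  with pform_ind2 := Induction for pform Sort Prop.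

Lemma prob_fin (R : realType) (M : imdp R) (s0 : st M)
  (P : probability (pathspace (st M) s0) R) (w : fpth (st M)) :
  P (cyl (st M) s0 w) = (fine (P (cyl (st M) s0 w)))%:E.
Proof.
rewrite fineK // ge0_fin_numE ?measure_ge0 //.
apply: (le_lt_trans (probability_le1 _ _)); last exact: ltey.
exact: cyl_meas.
Qed.

Section Main.
Variables (R : realType) (M : imdp R).
Local Notation S := (st M).
Local Notation A := (act M).
Variable Rl : rel S.
Hypothesis hB : is_forall_bisim Rl.

Lemma hRl : is_equivalence Rl.
Proof. by case: hB. Qed.

Lemma bisim_BS : forall x y, Rl x y -> forall mu, coop_step x mu ->
  exists nu, coop_step y nu /\ forall z, class_mass Rl mu z = class_mass Rl nu z.
Proof. by move=> x y r; case: hB => _ /(_ x y r) []. Qed.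

Definition Pp (g : pform (ap M)) : Prop := exists G : nat -> fpth S -> Prop,
  [/\ forall om, sat_p g om <-> exists n, G n (pre om n),
      forall om n m, G n (pre om n) -> G m (pre om m) -> n = m &
      forall n w w', reppath Rl w = reppath Rl w' -> G n w -> G n w'].

Definition Ps (f : sform (ap M)) : Prop :=
  forall x y, Rl x y -> (sat_s f x <-> sat_s f y).

Lemma prob_transfer c p g x y : Rl x y -> Pp g ->
  sat_s (SProb c p g) x -> sat_s (SProb c p g) y.
Proof.
move=> r [G [hG1 hG2 hG3]] [sg [pi [P [[hP0 hPe] hc]]]].
pose mu := fun w z => \sum_a sg w a * pi w a z.
have hmu : forall w, coop_step (flast w) (mu w).
  move=> w; apply: (@AF_coop _ _ _ (sg w) (pi w) id).
  - by case: (sched_distr sg w).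
  - by case: (sched_distr sg w).
  - by move=> a; exact: natf_in.
  - by [].
pose Q w := fine (P (cyl S x w)).
have Q0 : forall z, Q (z, [::]) = if z == x then 1 else 0.
  by move=> z; rewrite /Q hP0; case: ifP.
have Qe : forall w z, Q (fext w z) = Q w * mu w z.
  by move=> w z; rewrite /Q hPe (prob_fin P w) -EFinM.
have Qp : forall w, 0 <= Q w by move=> w; apply: fine_ge0; exact: measure_ge0.
have [nu [hnu hQc]] := emulate hRl bisim_BS r hmu Q0 Qe Qp.
have : forall w, exists sp : (A -> R) * (A -> S -> R),
    is_distr sp.1 /\ (forall a, Gamma (flast w) a (sp.2 a)) /\
    forall z, nu w z = \sum_a sp.1 a * sp.2 a z.
  by move=> w; have [sg1 [pi1 [h1 [h2 h3]]]] := coop_AF (hnu w); exists (sg1, pi1).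
move=> /choice [sp hsp].
pose sg' := @Scheduler R M (fun w => (sp w).1) (fun w => proj1 (hsp w)).
pose pi' := @Nature R M (fun w => (sp w).2) (fun w => proj1 (proj2 (hsp w))).
pose q w z := \sum_a (sp w).1 a * (sp w).2 a z.
have hq : forall w, is_distr (q w).
  move=> w; case: (hsp w) => [[s0 s1] [hg _]]; split.
  - move=> z; apply: sumr_ge0 => a _; rewrite mulr_ge0 //.
    by case: (hg a) => -[+ _] _; apply.
  - rewrite /q exchange_big /= -s1; apply: eq_bigr => a _.
    by rewrite -mulr_sumr; case: (hg a) => -[_ ->] _; rewrite mulr1.
have [P' [hP'0 hP'e]] := path_measure_exists y hq.
pose Q' w := fine (P' (cyl S y w)).
have Q'0 : forall z, Q' (z, [::]) = if z == y then 1 else 0.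
  by move=> z; rewrite /Q' hP'0; case: ifP.
have Q'e : forall w z, Q' (fext w z) = Q' w * nu w z.
  move=> w z; rewrite /Q' hP'e (prob_fin P' w) -EFinM /=.
  by case: (hsp w) => _ [_ ->].
have Q'p : forall w, 0 <= Q' w by move=> w; apply: fine_ge0; exact: measure_ge0.
have hQc' := hQc Q' Q'0 Q'e Q'p.
exists sg', pi', P'; split; first by split.
have E (s0 : S) : [set om : ipath S s0 | sat_p g om] =
    [set om | exists n, G n (pre om n)].
  by apply/seteqP; split => om /hG1.
have -> : P' [set om : ipath S y | sat_p g om] = P [set om : ipath S x | sat_p g om].
  rewrite !E !measure_decomp //.
  apply: eq_eseriesr => n _.
  transitivity ((\sum_(p : PT M n | `[< G n (topath p) >]) Q' (topath p))%:E).
    rewrite -sumEFin; apply: eq_bigr => p0 _; exact: prob_fin.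
  transitivity ((\sum_(p : PT M n | `[< G n (topath p) >]) Q (topath p))%:E).
    by rewrite (sumG_eq (hQc' n) (hG3 n)).
  rewrite -sumEFin; apply: eq_bigr => p0 _; exact/esym/prob_fin.
exact: hc.
Qed.

Definition Gu (F1 F2 : S -> Prop) (B : nat -> Prop) n w :=
  [/\ B n, F2 (at_ w n) & forall j, (j < n)%N -> F1 (at_ w j) /\ ~ F2 (at_ w j)].

Lemma until_decomp (F1 F2 : S -> Prop) (B : nat -> Prop) :
  (forall x y, Rl x y -> F1 x -> F1 y) -> (forall x y, Rl x y -> F2 x -> F2 y) ->
  (forall n m, (m <= n)%N -> B n -> B m) ->
  [/\ forall om : nat -> S,
        (exists i, B i /\ F2 (om i) /\ forall j, (j < i)%N -> F1 (om j)) <->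
        exists n, Gu F1 F2 B n (pre om n),
      forall om n m, Gu F1 F2 B n (pre om n) -> Gu F1 F2 B m (pre om m) -> n = m &
      forall n w w', reppath Rl w = reppath Rl w' -> Gu F1 F2 B n w -> Gu F1 F2 B n w'].
Proof.
move=> c1 c2 hB'; rewrite /Gu; split.
- move=> om; split.
  + move=> [i [Bi [F2i F1i]]].
    have ex : exists m, `[< F2 (om m) >] by exists i; exact/asboolP.
    case: (ex_minnP ex) => m /asboolP F2m minm.
    have mi : (m <= i)%N by apply: minm; exact/asboolP.
    exists m; split.
    * exact: hB' mi Bi.
    * by rewrite at_pre.
    * move=> j jm; rewrite (at_pre om (ltnW jm)); split.
        by apply: F1i; exact: leq_trans jm mi.
      move=> F2j; have := minm j (introT (asboolP _) F2j).
      by rewrite leqNgt jm.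
  + move=> [n [Bn F2n F1n]]; exists n; split => //; split.
      by rewrite at_pre in F2n.
    move=> j jn; have := F1n j jn; rewrite (at_pre om (ltnW jn)); by case.
- move=> om n m [Bn F2n F1n] [Bm F2m F1m].
  rewrite at_pre // in F2n; rewrite at_pre // in F2m.
  case: (ltngtP n m) => // h.
  + by have := F1m n h; rewrite (at_pre om (ltnW h)) => -[_].
  + by have := F1n m h; rewrite (at_pre om (ltnW h)) => -[_].
- move=> n w w' e [Bn F2n F1n]; split => //.
    exact: c2 (rep_at hRl n e) F2n.
  move=> j jn; case: (F1n j jn) => h1 h2; split.
    exact: c1 (rep_at hRl j e) h1.
  by move=> h3; apply: h2; exact: c2 (rep_at hRl j (esym e)) h3.
Qed.

Lemma main_ind : forall f, Ps f.
Proof.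
case: (hRl) => refl [sym tr].
apply: (@sform_ind2 (ap M) Ps Pp).
- by move=> x y _.
- by move=> a x y r /=; case: hB => _ /(_ x y r) [->].
- by move=> f IH x y r /=; have := IH x y r; tauto.
- by move=> f1 IH1 f2 IH2 x y r /=; have := IH1 x y r; have := IH2 x y r; tauto.
- move=> c p g IHg x y r; split; first exact: prob_transfer.
  by apply: prob_transfer => //; exact: sym.
- move=> f IH.
  exists (fun n w => n = 1%N /\ sat_s f (at_ w 1)); split.
  + move=> om /=; split; first by move=> h; exists 1%N; rewrite at_pre.
    by move=> [n [-> h]]; rewrite at_pre in h.
  + by move=> om n m [-> _] [-> _].
  + move=> n w w' e [-> h]; split => //.
    by apply/(IH _ _ (rep_at hRl 1 e)).
- move=> f1 IH1 f2 IH2.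
  have c1 : forall x y, Rl x y -> sat_s f1 x -> sat_s f1 y by move=> x y r /(IH1 x y r).
  have c2 : forall x y, Rl x y -> sat_s f2 x -> sat_s f2 y by move=> x y r /(IH2 x y r).
  have [h1 h2 h3] := @until_decomp (sat_s f1) (sat_s f2) (fun _ => True) c1 c2 (fun _ _ _ _ => I).
  eexists; split; [|exact: h2|exact: h3].
  move=> om; rewrite -h1 /=; split.
  + by move=> [k [i [_ [F2i F1i]]]]; exists i.
  + by move=> [i [_ [F2i F1i]]]; exists i.+1, i.
- move=> f1 IH1 f2 IH2 k.
  have c1 : forall x y, Rl x y -> sat_s f1 x -> sat_s f1 y by move=> x y r /(IH1 x y r).
  have c2 : forall x y, Rl x y -> sat_s f2 x -> sat_s f2 y by move=> x y r /(IH2 x y r).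
  have hBk : forall n m, (m <= n)%N -> (n < k)%N -> (m < k)%N.
    by move=> n m mn nk; exact: leq_ltn_trans mn nk.
  have [h1 h2 h3] := @until_decomp (sat_s f1) (sat_s f2) (fun i => (i < k)%N) c1 c2 hBk.
  eexists; split; [|exact: h2|exact: h3].
  by move=> om; rewrite -h1.
Qed.

End Main.

Unset Implicit Arguments.

Theorem corollary1 (R : realType) (M : imdp R) (s t : st M) :
  bisim_forall s t ->
  forall phi : sform (ap M), sat_s phi s <-> sat_s phi t.
Proof.
move=> [Rl [hB r]] phi; exact: (main_ind hB phi r).
Qed.
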